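(* Every total strongly polynomial-time computable functional $F\colon\mathcal B\to\mathcal B$ is polynomial-time computable.
   Context: $\Sigma=\{0,1\}$, $\mathcal B=(\Sigma^* )^{\Sigma^*}$ is the set of total string functions. An oracle Turing machine $M^?$ with oracle $\varphi$ replaces, upon entering its query state, the query-tape content $\mathbf b$ by $\varphi(\mathbf b)$ in one time step; $\operatorname{time}_{M^\varphi}(\mathbf a)\in\mathbb N\cup\{\infty\}$ is its number of steps on input $\mathbf a$. $M^?$ computes $F$ if $M^\varphi=F(\varphi)$ for all $\varphi\in\mathcal B$. Size function: $|\varphi|(n)=\max\{|\varphi(\mathbf a)|:|\mathbf a|\le n\}$. Second-order polynomials: smallest class of functions $\mathbb N^{\mathbb N}\times\mathbb N\to\mathbb N$ containing $(l,n)\mapsto p(n)$ for polynomials $p$ with natural coefficients, closed under pointwise sum, product and $P\mapsto P^+$, $P^+(l,n)=l(P(l,n))$. $F$ is polynomial-time computable if computed by a machine with $\operatorname{time}_{M^\varphi}(\mathbf a)\le P(|\varphi|,|\mathbf a|)$ for all $\varphi,\mathbf a$ for some second-order polynomial $P$. Length revision function: for oracle $\varphi$ and input $\mathbf a$, let $\mathbf b_k$ be the content of the oracle answer tape at step $k$; $o_{\varphi,\mathbf a}(0)=|\mathbf a|$, $o_{\varphi,\mathbf a}(n+1)=\max\{o_{\varphi,\mathbf a}(n),|\mathbf b_{n+1}|\}$. A function $t\colon\mathbb N\to\mathbb N$ is a step-count for $M^?$ if for all $\varphi\in\mathcal B$, $\mathbf a\in\Sigma^*$ and all $n\le\operatorname{time}_{M^\varphi}(\mathbf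 a)$: $n\le t(o_{\varphi,\mathbf a}(n))$. $M^?$ has finite length-revision if there is $N\in\mathbb N$ with $\#o_{\varphi,\mathbf a}(\mathbb N)\le N$ for all $\varphi\in\mathcal B$, $\mathbf a\in\Sigma^*$ (where $o_{\varphi,\mathbf a}(\mathbb N)$ is the image of $o_{\varphi,\mathbf a}$). $F$ is strongly polynomial-time computable if it is computed by an oracle machine having finite length-revision and a polynomial step-count. *)

(* Defs.v *)
From mathcomp Require Import all_boot.
Set Implicit Arguments. Unset Strict Implicit. Unset Printing Implicit Defensive.

Definition string := seq bool.
Definition Bspace := string -> string.

Inductive move := MoveL | MoveS | MoveR.

Definition move_head (m : move) (h : nat) : nat :=
  match m with MoveL => h.-1 | MoveS => h | MoveR => h.+1 end.

(* An oracle Turing machine with: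
   - a read-only input tape (holding the input string),
   - a read-only oracle answer tape (written only by the oracle),
   - k.+2 read/write tapes over a finite alphabet Gam: tape 0 is the oracle
     query tape, tape 1 is the output tape, tapes 2..k+1 are work tapes.
   Read-only tapes show [Some b] on a bit and [None] (blank) elsewhere.
   The transition function acts in the ordinary states; in the query state
   the oracle step is performed, in the halting state the machine stops. *)
Record OTM : Type := {
  Gam : finType;
  blank : Gam;
  sym : bool -> Gam;
  sym_inj : sym true != sym false;
  blank_sym : forall b, blank != sym b;
  ntapes : nat;
  St : finType;
  q_start : St;
  q_halt : St;
  q_query : St;
  q_answer : St;
  delta : St -> option bool -> option bool -> ('I_ntapes.+2 -> Gam) ->
          St * ('I_ntapes.+2 -> Gam) * ('I_ntapes.+2 -> move) * move * move
}.

Record config (M : OTM) : Type := Config {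
  c_state : St M;
  c_in : string;
  c_in_head : nat;
  c_ans : string;
  c_ans_head : nat;
  c_tapes : 'I_(ntapes M).+2 -> seq (Gam M) * nat
}.

Section Machine.
Variable M : OTM.

Definition read_ro (s : string) (h : nat) : option bool :=
  if h < size s then Some (nth false s h) else None.

Fixpoint rw_content (s : seq (Gam M)) : string :=
  match s with
  | [::] => [::]
  | g :: s' => match [pick b | g == sym M b] with
               | Some b => b :: rw_content s'
               | None => [::]
               end
  end.

Definition query_tape : 'I_(ntapes M).+2 := ord0.
Definition output_tape : 'I_(ntapes M).+2 := lift ord0 ord0.

Definition init (a : string) : config M :=
  Config (q_start M) a 0 [::] 0 (fun _ => ([::], 0)).

Definition halted (c : config M) : bool := c_state c == q_halt M.

Definition step (phi : Bspace) (c : config M) : config M :=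
  if c_state c == q_halt M then c
  else if c_state c == q_query M then
    Config (q_answer M) (c_in c) (c_in_head c)
           (phi (rw_content (c_tapes c query_tape).1)) 0
           (fun i => if i == query_tape then ([::], 0) else c_tapes c i)
  else
    let: (q', w, mv, mi, ma) :=
       delta (c_state c) (read_ro (c_in c) (c_in_head c)) (read_ro (c_ans c) (c_ans_head c))
             (fun i => nth (blank M) (c_tapes c i).1 (c_tapes c i).2) in
    Config q' (c_in c) (move_head mi (c_in_head c)) (c_ans c) (move_head ma (c_ans_head c))
           (fun i => (set_nth (blank M) (c_tapes c i).1 (c_tapes c i).2 (w i),
                      move_head (mv i) (c_tapes c i).2)).

Definition run (phi : Bspace) (a : string) (n : nat) : config M :=
  iter n (step phi) (init a).

Definition le_time (phi : Bspace) (a : string) (n : nat) : Prop :=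
  forall m, m < n -> ~~ halted (run phi a m).

Definition time_le (phi : Bspace) (a : string) (T : nat) : Prop :=
  exists2 m, m <= T & halted (run phi a m).

Definition outputs (phi : Bspace) (a y : string) : Prop :=
  exists n, halted (run phi a n) /\ rw_content (c_tapes (run phi a n) output_tape).1 = y.

Definition computes (F : Bspace -> Bspace) : Prop :=
  forall phi a, outputs phi a (F phi a).

Fixpoint lrev (phi : Bspace) (a : string) (n : nat) : nat :=
  match n with
  | 0 => size a
  | n'.+1 => maxn (lrev phi a n') (size (c_ans (run phi a n'.+1)))
  end.

Definition step_count (t : nat -> nat) : Prop :=
  forall phi a n, le_time phi a n -> n <= t (lrev phi a n).

Definition image_card_le (f : nat -> nat) (N : nat) : Prop :=
  forall s : seq nat, uniq s -> (forall x, x \in s -> exists n, f n = x) -> size s <= N.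

Definition finite_length_revision : Prop :=
  exists N, forall phi a, image_card_le (lrev phi a) N.
End Machine.

Definition peval (cs : seq nat) (n : nat) : nat :=
  \sum_(i < size cs) nth 0 cs i * n ^ i.

Inductive sopoly :=
  | SPpoly of seq nat
  | SPadd of sopoly & sopoly
  | SPmul of sopoly & sopoly
  | SPapp of sopoly.

Fixpoint speval (P : sopoly) (l : nat -> nat) (n : nat) : nat :=
  match P with
  | SPpoly cs => peval cs n
  | SPadd P Q => speval P l n + speval Q l n
  | SPmul P Q => speval P l n * speval Q l n
  | SPapp P => l (speval P l n)
  end.

Definition sizefun (phi : Bspace) (n : nat) : nat :=
  \max_(i < n.+1) \max_(w : i.-tuple bool) size (phi w).

Definition poly_time_computable (F : Bspace -> Bspace) : Prop :=
  exists M : OTM, computes M F /\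
    exists P : sopoly, forall phi a, time_le M phi a (speval P (sizefun phi) (size a)).

Definition strongly_poly_time_computable (F : Bspace -> Bspace) : Prop :=
  exists M : OTM, computes M F /\ finite_length_revision M /\
    exists cs : seq nat, step_count M (peval cs).

(* Main.v *)
Require Import Defs.
From mathcomp Require Import all_boot.

Set Implicit Arguments. Unset Strict Implicit. Unset Printing Implicit Defensive.

Lemma peval_nil x : peval [::] x = 0.
Proof. by rewrite /peval big_ord0. Qed.

Lemma peval_cons c cs x : peval (c :: cs) x = c + x * peval cs x.
Proof.
rewrite /peval /= big_ord_recl /= expn0 muln1; congr (_ + _).
rewrite big_distrr /=; apply: eq_bigr => i _.
by rewrite /bump /= expnS mulnCA.
Qed.

Lemma peval_mono cs m n : m <= n -> peval cs m <= peval cs n.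
Proof.
move=> le; elim: cs => [|c cs IH]; first by rewrite !peval_nil.
by rewrite !peval_cons leq_add2l leq_mul.
Qed.

Fixpoint pcomp (cs : seq nat) (P : sopoly) : sopoly :=
  match cs with
  | [::] => SPpoly [::]
  | c :: cs' => SPadd (SPpoly [:: c]) (SPmul P (pcomp cs' P))
  end.

Lemma speval_pcomp cs P l n : speval (pcomp cs P) l n = peval cs (speval P l n).
Proof.
elim: cs => [|c cs IH] /=; first by rewrite !peval_nil.
by rewrite IH peval_cons peval_cons peval_nil muln0 addn0.
Qed.

Fixpoint Bp (cs : seq nat) (j : nat) : sopoly :=
  match j with
  | 0 => SPpoly [:: 0; 1]
  | j'.+1 => SPadd (Bp cs j') (SPapp (pcomp cs (Bp cs j')))
  end.

Lemma speval_Bp0 cs l n : speval (Bp cs 0) l n = n.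
Proof. by rewrite /= !peval_cons peval_nil muln0 addn0 muln1. Qed.

Lemma Bp_mono cs l n i j : i <= j -> speval (Bp cs i) l n <= speval (Bp cs j) l n.
Proof.
elim: j => [|j IH]; first by rewrite leqn0 => /eqP ->.
rewrite leq_eqVlt => /orP [/eqP -> //| ]; rewrite ltnS => /IH H.
by apply: leq_trans H _; rewrite /= leq_addr.
Qed.

Lemma sizefun_ge phi q X : size q <= X -> size (phi q) <= sizefun phi X.
Proof.
move=> H; rewrite /sizefun.
have H' : size q < X.+1 by [].
apply: leq_trans (@leq_bigmax _ (fun i : 'I_X.+1 => \max_(w : i.-tuple bool) size (phi w)) (Ordinal H')).
exact: (@leq_bigmax _ (fun w : (size q).-tuple bool => size (phi w)) (in_tuple q)).
Qed.

Section Mach.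
Variable M : OTM.
Variable phi : Bspace.
Variable a : string.

Lemma runS n : run M phi a n.+1 = step phi (run M phi a n).
Proof. by []. Qed.

Lemma move_head_le m h : move_head m h <= h.+1.
Proof. by case: m => /=; [apply: leq_trans (leq_pred h) (leqnSn h)|exact: leqnSn|]. Qed.

Lemma rw_content_size (s : seq (Gam M)) : size (rw_content s) <= size s.
Proof.
elim: s => [|g s IH] //=; case: pickP => [b _|_] //=.
Qed.

Lemma tapes_inv n i : size (c_tapes (run M phi a n) i).1 <= n /\ (c_tapes (run M phi a n) i).2 <= n.
Proof.
elim: n i => [|n IH] i; first by [].
rewrite runS /step.
case: ifP => _; first by case: (IH i) => H1 H2; split; apply: leq_trans (leqnSn _).
case: ifP => _.
  rewrite /=; case: (i == query_tape M); first by [].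
  by case: (IH i) => H1 H2; split; apply: leq_trans (leqnSn _).
case: (delta _ _ _ _) => [[[[q' w] mv] mi] ma] /=.
case: (IH i) => H1 H2; split.
  by rewrite size_set_nth geq_max ltnS H2 (leq_trans H1).
exact: leq_trans (move_head_le _ _) _.
Qed.

Lemma ans_step n : c_ans (run M phi a n.+1) = c_ans (run M phi a n) \/
   exists q, size q <= n /\ c_ans (run M phi a n.+1) = phi q.
Proof.
rewrite runS /step.
case: ifP => _; first by left.
case: ifP => _.
  right; eexists; split; last by reflexivity.
  apply: leq_trans (rw_content_size _) _; exact: (tapes_inv n (query_tape M)).1.
by case: (delta _ _ _ _) => [[[[q' w] mv] mi] ma] /=; left.
Qed.

Lemma ans_le_lrev n : size (c_ans (run M phi a n)) <= lrev M phi a n.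
Proof. by case: n => [|n] //=; rewrite leq_maxr. Qed.

Lemma lrev_mono m n : m <= n -> lrev M phi a m <= lrev M phi a n.
Proof.
elim: n => [|n IH]; first by rewrite leqn0 => /eqP ->.
rewrite leq_eqVlt => /orP [/eqP -> //| ]; rewrite ltnS => /IH H.
by apply: leq_trans H _; rewrite /= leq_maxl.
Qed.

Fixpoint Dn n := match n with 0 => 0 | n'.+1 => Dn n' + (lrev M phi a n' < lrev M phi a n'.+1) end.
Fixpoint Ln n : seq nat := match n with
  | 0 => [:: lrev M phi a 0]
  | n'.+1 => if lrev M phi a n' < lrev M phi a n'.+1 then lrev M phi a n'.+1 :: Ln n' else Ln n' end.

Lemma Ln_props n : [/\ size (Ln n) = (Dn n).+1, uniq (Ln n),
   forall x, x \in Ln n -> x <= lrev M phi a n & forall x, x \in Ln n -> exists k, lrev M phi a k = x].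
Proof.
elim: n => [|n [IH1 IH2 IH3 IH4]].
  split => //; [by move=> x; rewrite inE => /eqP -> | by move=> x; rewrite inE => /eqP ->; exists 0].
rewrite /=; case: ifP => lt.
  split => /=; first by rewrite IH1 addn1.
  - rewrite IH2 andbT; apply/negP => /IH3; by rewrite leqNgt lt.
  - move=> x; rewrite inE => /orP [/eqP -> //|/IH3 H]; exact: leq_trans H (ltnW lt).
  - by move=> x; rewrite inE => /orP [/eqP ->|/IH4 //]; exists n.+1.
split => //; first by rewrite addn0.
move=> x /IH3 H; apply: leq_trans H _; exact: lrev_mono (leqnSn _).
Qed.

Lemma halted_persist m k : halted (run M phi a m) -> halted (run M phi a (m + k)).
Proof.
elim: k => [|k IH]; first by rewrite addn0.
move=> H; rewrite addnS runS /step; have := IH H; rewrite /halted => /eqP E.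
by rewrite E eqxx /halted E.
Qed.

End Mach.

Theorem mainTheorem10 (F : Bspace -> Bspace) :
  strongly_poly_time_computable F -> poly_time_computable F.
Proof.
move=> [M [comp [[N fin] [cs stc]]]].
exists M; split => //.
exists (pcomp cs (Bp cs N)) => phi a.
set S := sizefun phi.
set Bv := fun j => speval (Bp cs j) S (size a).
have claim : forall n, le_time M phi a n -> lrev M phi a n <= Bv (Dn M phi a n).
  elim => [|n IH] lt; first by rewrite /Bv speval_Bp0.
  have ltn' : le_time M phi a n by move=> m mn; apply: lt; apply: leq_trans mn _.
  have IHn := IH ltn'.
  have -> : Dn M phi a n.+1 = Dn M phi a n + (lrev M phi a n < lrev M phi a n.+1) by [].
  case ltl: (lrev M phi a n < lrev M phi a n.+1); last first.
    rewrite addn0; apply: leq_trans IHn; by rewrite leqNgt ltl.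
  have E : lrev M phi a n.+1 = size (c_ans (run M phi a n.+1)).
    by move: ltl; rewrite /= /maxn; case: ifP => // _; rewrite ltnn.
  rewrite E addn1 /Bv /=.
  case: (ans_step M phi a n) => [eq | [q [qs eq]]].
    by move: ltl; rewrite E eq ltnNge ans_le_lrev.
  rewrite eq; apply: leq_trans (leq_addl _ _); rewrite speval_pcomp.
  apply: sizefun_ge; apply: leq_trans qs _.
  apply: leq_trans (stc phi a n ltn') _; exact: peval_mono.
have bnd : forall n, le_time M phi a n -> lrev M phi a n <= Bv N.
  move=> n /claim H; apply: leq_trans H _; apply: Bp_mono.
  case: (Ln_props M phi a n) => s1 s2 _ s4.
  by have := fin phi a (Ln M phi a n) s2 s4; rewrite s1 => /ltnW.
rewrite speval_pcomp.
exists (peval cs (Bv N)) => //.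
apply/negPn/negP => nh.
have lt : le_time M phi a (peval cs (Bv N)).+1.
  move=> m; rewrite ltnS => mle; apply/negP => hm.
  by have := @halted_persist M phi a m (peval cs (Bv N) - m) hm; rewrite subnKC // (negbTE nh).
have := stc phi a _ lt; rewrite ltnNge => /negP; apply.
exact: peval_mono (bnd _ lt).
Qed.
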